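(* Let $\mathcal{H}$ be a Hilbert space, $K(\mathcal{H})$ the $C^*$-algebra of compact operators on $\mathcal{H}$, and $\mathcal{E}$ a Hilbert $K(\mathcal{H})$-module of (orthogonal) dimension one having the one-element orthonormal basis $\{y\}$ with $\langle y,y\rangle=\xi\otimes\xi$ for some unit vector $\xi\in\mathcal{H}$. Let $x,z\in\mathcal{E}$. If $x\parallel y$ and $y\parallel z$, then $x\parallel z$.
   Context: A (left) Hilbert $K(\mathcal{H})$-module is a left $K(\mathcal{H})$-module $\mathcal{E}$ with a $K(\mathcal{H})$-valued inner product $\langle\cdot,\cdot\rangle$, linear in the first variable and conjugate linear in the second, satisfying $\langle x,x\rangle\ge 0$ with equality iff $x=0$, $\langle ax,y\rangle = a\langle x,y\rangle$ and $\langle x,y\rangle^*=\langle y,x\rangle$, and complete for the norm $\|x\|=\|\langle x,x\rangle\|^{1/2}$. For $\xi,\eta\in\mathcal{H}$ (inner product $[\cdot,\cdot]$), $(\xi\otimes\eta)(\zeta)=[\zeta,\eta]\xi$. A system $\{x_\alpha\}_{\alpha\in\Lambda}\subset\mathcal{E}$ is orthonormal if $\|x_\alpha\|=1$, $\langle x_\alpha,x_\beta\rangle=0$ for $\alpha\ne\beta$, and each $\langle x_\alpha,x_\alpha\rangle$ is a minimal projection; it is an orthonormal basis if it generates a dense submodule of $\mathcal{E}$; the orthogonal dimension is the cardinality of an orthonormal basis. $x\parallel y$ (norm-parallel) means $\|x+\lambda y\|=\|x\|+\|y\|$ for some $\lambda\in\mathbb{C}$ with $|\lambda|=1$. *)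

(* Defs.v *)
From mathcomp Require Import all_boot all_order all_algebra.
From mathcomp Require Import classical_sets reals complex.
Set Implicit Arguments. Unset Strict Implicit. Unset Printing Implicit Defensive.
Import Order.TTheory GRing.Theory Num.Theory.
Local Open Scope ring_scope.
Local Open Scope classical_set_scope.

Section HilbertModules.
Variable R : realType.
Local Notation C := R[i].

Variable H : lmodType C.
Variable ip : H -> H -> C.

Definition hnorm (x : H) : R := Num.sqrt (complex.Re (ip x x)).

Definition is_hilbert_space : Prop :=
  [/\ (forall (a : C) (x y z : H), ip (a *: x + y) z = a * ip x z + ip y z),
      (forall x y : H, ip y x = (ip x y)^*),
      (forall x : H, 0 <= ip x x),
      (forall x : H, ip x x = 0 -> x = 0) &
      (forall u : nat -> H,
         (forall e : R, 0 < e -> exists N : nat, forall m n : nat,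
            (N <= m)%N -> (N <= n)%N -> hnorm (u m - u n) < e) ->
         exists l : H, forall e : R, 0 < e -> exists N : nat, forall n : nat,
            (N <= n)%N -> hnorm (u n - l) < e)].

Definition op_linear (T : H -> H) : Prop :=
  forall (a : C) (x y : H), T (a *: x + y) = a *: T x + T y.

(* compact operator: linear, and the image of the unit ball is relatively
   compact, i.e. (H being complete) totally bounded *)
Definition compact_op (T : H -> H) : Prop :=
  op_linear T /\
  forall e : R, 0 < e -> exists s : seq H, forall x : H, hnorm x <= 1 ->
    exists2 y, y \in s & hnorm (T x - y) < e.

Definition opnorm (T : H -> H) : R :=
  sup [set hnorm (T x) | x in [set x : H | hnorm x <= 1]].

(* adjoint relation: S = T^* *)
Definition is_adjoint (S T : H -> H) : Prop :=
  forall u v : H, ip (T u) v = ip u (S v).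

Definition positive_op (T : H -> H) : Prop := forall u : H, 0 <= ip (T u) u.

Definition projection (p : H -> H) : Prop :=
  compact_op p /\ (forall u, p (p u) = p u) /\ is_adjoint p p.

Definition minimal_projection (p : H -> H) : Prop :=
  projection p /\ (exists u, p u <> 0) /\
  forall q : H -> H, projection q -> (forall u, q (p u) = q u) ->
    (forall u, q u = 0) \/ (forall u, q u = p u).

Definition tensor_op (xi eta : H) : H -> H := fun zeta => ip zeta eta *: xi.

Variable E : lmodType C.
Variable act : (H -> H) -> E -> E.
Variable mip : E -> E -> (H -> H).

Definition mnorm (x : E) : R := Num.sqrt (opnorm (mip x x)).

Definition is_hilbert_KH_module : Prop :=
      (forall a b (x y : E) (l : C), compact_op a -> compact_op b ->
         [/\ act a (x + y) = act a x + act a y,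
             act (fun h => a h + b h) x = act a x + act b x,
             act (fun h => a (b h)) x = act a (act b x),
             act (fun h => l *: a h) x = l *: act a x &
             act a (l *: x) = l *: act a x]) /\
      (forall x y : E, compact_op (mip x y)) /\
      (forall (l : C) (x y z : E) (h : H),
         mip (l *: x + y) z h = l *: mip x z h + mip y z h) /\
      (forall a (x y : E) (h : H), compact_op a ->
         mip (act a x) y h = a (mip x y h)) /\
      (forall x y : E, is_adjoint (mip y x) (mip x y)) /\
      (forall x : E, positive_op (mip x x)) /\
      (forall x : E, (forall h, mip x x h = 0) -> x = 0) /\
      (forall u : nat -> E,
         (forall e : R, 0 < e -> exists N : nat, forall m n : nat,
            (N <= m)%N -> (N <= n)%N -> mnorm (u m - u n) < e) ->
         exists l : E, forall e : R, 0 < e -> exists N : nat, forall n : nat,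
            (N <= n)%N -> mnorm (u n - l) < e).

Inductive gen_submodule (y : E) : E -> Prop :=
  | gen_base : gen_submodule y y
  | gen_zero : gen_submodule y 0
  | gen_add x z : gen_submodule y x -> gen_submodule y z -> gen_submodule y (x + z)
  | gen_scale (l : C) x : gen_submodule y x -> gen_submodule y (l *: x)
  | gen_act a x : compact_op a -> gen_submodule y x -> gen_submodule y (act a x).

Definition singleton_orthonormal_basis (y : E) : Prop :=
  [/\ mnorm y = 1,
      minimal_projection (mip y y) &
      forall (x : E) (e : R), 0 < e ->
        exists2 w, gen_submodule y w & mnorm (x - w) < e].

Definition norm_parallel (x y : E) : Prop :=
  exists l : C, `|l| = 1 /\ mnorm (x + l *: y) = mnorm x + mnorm y.

End HilbertModules.

(* Main.v *)
Require Import Defs.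
From mathcomp Require Import all_boot all_order all_algebra.
From mathcomp Require Import classical_sets reals complex.
From mathcomp Require Import boolp ring lra.
Import Order.TTheory GRing.Theory Num.Theory.
Local Open Scope complex_scope.
Local Open Scope ring_scope.
Set Implicit Arguments. Unset Strict Implicit.

Lemma ip0l (R : realType) (H : lmodType R[i]) (ip : H -> H -> R[i])
  (hH : is_hilbert_space ip) z : ip 0 z = 0.
Proof.
case: hH => lin _ _ _ _.
have := lin 1 0 0 z; rewrite scale1r addr0 mul1r => /eqP.
by rewrite -subr_eq0 opprD addrA subrr sub0r oppr_eq0 => /eqP.
Qed.

Lemma ipDl (R : realType) (H : lmodType R[i]) (ip : H -> H -> R[i])
  (hH : is_hilbert_space ip) x y z : ip (x + y) z = ip x z + ip y z.
Proof. by case: (hH) => lin _ _ _ _; rewrite -[x]scale1r lin mul1r scale1r. Qed.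

Lemma ipZl (R : realType) (H : lmodType R[i]) (ip : H -> H -> R[i])
  (hH : is_hilbert_space ip) a x z : ip (a *: x) z = a * ip x z.
Proof.
case: (hH) => lin _ _ _ _; have := lin a x 0 z.
by rewrite addr0 (ip0l hH) addr0.
Qed.

Lemma ipC (R : realType) (H : lmodType R[i]) (ip : H -> H -> R[i])
  (hH : is_hilbert_space ip) x y : ip y x = (ip x y)^*.
Proof. by case: hH. Qed.

Lemma ipNl (R : realType) (H : lmodType R[i]) (ip : H -> H -> R[i])
  (hH : is_hilbert_space ip) x z : ip (- x) z = - ip x z.
Proof. by rewrite -scaleN1r (ipZl hH) mulN1r. Qed.

Lemma ipBl (R : realType) (H : lmodType R[i]) (ip : H -> H -> R[i])
  (hH : is_hilbert_space ip) x y z : ip (x - y) z = ip x z - ip y z.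
Proof. by rewrite (ipDl hH) (ipNl hH). Qed.

Lemma ipDr (R : realType) (H : lmodType R[i]) (ip : H -> H -> R[i])
  (hH : is_hilbert_space ip) x y z : ip z (x + y) = ip z x + ip z y.
Proof. by rewrite (ipC hH) (ipDl hH) rmorphD /= -!(ipC hH). Qed.

Lemma ipZr (R : realType) (H : lmodType R[i]) (ip : H -> H -> R[i])
  (hH : is_hilbert_space ip) a x z : ip z (a *: x) = a^* * ip z x.
Proof. by rewrite (ipC hH) (ipZl hH) rmorphM /= -(ipC hH). Qed.

Lemma ip0r (R : realType) (H : lmodType R[i]) (ip : H -> H -> R[i])
  (hH : is_hilbert_space ip) z : ip z 0 = 0.
Proof. by rewrite (ipC hH) (ip0l hH) rmorph0. Qed.

Lemma ipNr (R : realType) (H : lmodType R[i]) (ip : H -> H -> R[i])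
  (hH : is_hilbert_space ip) x z : ip z (- x) = - ip z x.
Proof. by rewrite (ipC hH) (ipNl hH) rmorphN /= -(ipC hH). Qed.

Lemma ipBr (R : realType) (H : lmodType R[i]) (ip : H -> H -> R[i])
  (hH : is_hilbert_space ip) x y z : ip z (x - y) = ip z x - ip z y.
Proof. by rewrite (ipDr hH) (ipNr hH). Qed.

Lemma ip_ge0 (R : realType) (H : lmodType R[i]) (ip : H -> H -> R[i])
  (hH : is_hilbert_space ip) x : 0 <= ip x x.
Proof. by case: hH => _ _ h _ _; apply: h. Qed.

Lemma ip_eq0 (R : realType) (H : lmodType R[i]) (ip : H -> H -> R[i])
  (hH : is_hilbert_space ip) x : ip x x = 0 -> x = 0.
Proof. by case: hH => _ _ _ h _; apply: h. Qed.

Lemma ip_orth (R : realType) (H : lmodType R[i]) (ip : H -> H -> R[i])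
  (hH : is_hilbert_space ip) a b : (forall u, ip u a = ip u b) -> a = b.
Proof.
move=> h; apply/eqP; rewrite -subr_eq0; apply/eqP; apply: (ip_eq0 hH).
by rewrite (ipBr hH) h subrr.
Qed.

Lemma Re_ge0 (R : realType) (H : lmodType R[i]) (ip : H -> H -> R[i])
  (hH : is_hilbert_space ip) x : 0 <= complex.Re (ip x x).
Proof. by have := ip_ge0 hH x; rewrite lecE => /andP[_ h]; exact: h. Qed.

Lemma ip_realE (R : realType) (H : lmodType R[i]) (ip : H -> H -> R[i])
  (hH : is_hilbert_space ip) x : (complex.Re (ip x x))%:C = ip x x.
Proof. by apply: RRe_real; apply: ger0_real; apply: ip_ge0. Qed.

Lemma hnorm_ge0 (R : realType) (H : lmodType R[i]) (ip : H -> H -> R[i]) x :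
  0 <= hnorm ip x.
Proof. exact: sqrtr_ge0. Qed.

Lemma hnorm_sq (R : realType) (H : lmodType R[i]) (ip : H -> H -> R[i])
  (hH : is_hilbert_space ip) x : hnorm ip x ^+ 2 = complex.Re (ip x x).
Proof. by rewrite /hnorm sqr_sqrtr // (Re_ge0 hH). Qed.

Lemma hnormC (R : realType) (H : lmodType R[i]) (ip : H -> H -> R[i])
  (hH : is_hilbert_space ip) x : ((hnorm ip x)%:C) ^+ 2 = ip x x.
Proof. by rewrite -rmorphXn /= (hnorm_sq hH) (ip_realE hH). Qed.

Lemma hnormC_ge0 (R : realType) (H : lmodType R[i]) (ip : H -> H -> R[i]) x :
  0 <= (hnorm ip x)%:C.
Proof. by rewrite lecR hnorm_ge0. Qed.

Lemma hnormZ (R : realType) (H : lmodType R[i]) (ip : H -> H -> R[i])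
  (hH : is_hilbert_space ip) a x :
  (hnorm ip (a *: x))%:C = `|a| * (hnorm ip x)%:C.
Proof.
apply/eqP; rewrite -(@eqrXn2 _ 2) //; last first.
  by rewrite mulr_ge0 // ?hnormC_ge0.
  by rewrite hnormC_ge0.
by rewrite exprMn !(hnormC hH) (ipZl hH) (ipZr hH) normCK mulrA.
Qed.

Lemma CS (R : realType) (H : lmodType R[i]) (ip : H -> H -> R[i])
  (hH : is_hilbert_space ip) h u :
  `|ip h u| <= (hnorm ip h)%:C * (hnorm ip u)%:C.
Proof.
have [u0|unz] := eqVneq (ip u u) 0.
  by rewrite (ip_eq0 hH u0) (ip0r hH) normr0 mulr_ge0 ?hnormC_ge0.
set a := ip h u; set r := ip u u.
have rgt0 : 0 < r by rewrite lt_def unz (ip_ge0 hH).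
have rc : r^* = r by rewrite /r -(ipC hH).
have := ip_ge0 hH (h - (a / r) *: u).
rewrite !(ipBl hH, ipBr hH, ipZl hH, ipZr hH) -/r.
rewrite [ip u h](ipC hH) -/a rmorphM /= fmorphV /= rc.
have -> : ip h h - a^* / r * a - (a / r * a^* - a / r * (a^* / r * r)) =
  ip h h - a * a^* / r by field.
rewrite subr_ge0 ler_pdivrMr // -normCK /r -(hnormC hH h) -(hnormC hH u) -exprMn.
rewrite ler_pXn2r // nnegrE ?normr_ge0 //.
by rewrite mulr_ge0 ?hnormC_ge0.
Qed.

Lemma lin0 (R : realType) (H : lmodType R[i]) (T : H -> H) :
  op_linear T -> T 0 = 0.
Proof.
move=> hl; have := hl 1 0 0; rewrite !scale1r addr0 => /eqP.
by rewrite -subr_eq0 opprD addrA subrr sub0r oppr_eq0 => /eqP.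
Qed.

Lemma linZ (R : realType) (H : lmodType R[i]) (T : H -> H) :
  op_linear T -> forall a x, T (a *: x) = a *: T x.
Proof. by move=> hl a x; have := hl a x 0; rewrite addr0 (lin0 hl) addr0. Qed.

Lemma linD (R : realType) (H : lmodType R[i]) (T : H -> H) :
  op_linear T -> forall x y, T (x + y) = T x + T y.
Proof. by move=> hl x y; have := hl 1 x y; rewrite !scale1r. Qed.

Lemma adj_unique (R : realType) (H : lmodType R[i]) (ip : H -> H -> R[i])
  (hH : is_hilbert_space ip) (S1 S2 T : H -> H) :
  is_adjoint ip S1 T -> is_adjoint ip S2 T -> forall v, S1 v = S2 v.
Proof. by move=> h1 h2 v; apply: (ip_orth hH) => u; rewrite -h1 -h2. Qed.

Lemma ip_par (R : realType) (H : lmodType R[i]) (ip : H -> H -> R[i])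
  (hH : is_hilbert_space ip) a b :
  ip (a + b) (a + b) <= 2%:R * ip a a + 2%:R * ip b b.
Proof.
rewrite -subr_ge0; have := ip_ge0 hH (a - b).
rewrite !(ipDl hH, ipDr hH, ipBl hH, ipBr hH, ipNl hH, ipNr hH) opprK.
by congr (_ <= _); ring.
Qed.

Lemma sum_ge_elt (R : realType) (T : eqType) (f : T -> R[i]) (s : seq T) y :
  (forall z, 0 <= f z) -> y \in s -> f y <= \sum_(z <- s) f z.
Proof.
move=> f0; elim: s => // a s IH; rewrite in_cons big_cons => /orP[/eqP->|ys].
  by rewrite lerDl sumr_ge0.
by rewrite (le_trans (IH ys)) // lerDr.
Qed.

Lemma compact_bounded (R : realType) (H : lmodType R[i]) (ip : H -> H -> R[i])
  (hH : is_hilbert_space ip) (T : H -> H) :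
  compact_op ip T -> exists M : R, forall x, hnorm ip x <= 1 -> hnorm ip (T x) <= M.
Proof.
case=> _ /(_ 1 ltr01) [s hs].
exists (1 + complex.Re (2%:R + 2%:R * \sum_(z <- s) ip z z)) => x /hs [y ys hy].
have h1 : ip (T x) (T x) <= 2%:R + 2%:R * \sum_(z <- s) ip z z.
  rewrite -[T x](subrK y); apply: (le_trans (ip_par hH _ _)).
  apply: lerD.
    rewrite -(hnormC hH) -[X in _ <= X]mulr1 ler_pM2l ?ltr0n //.
    rewrite -rmorphXn /= -[1]/(1%:C) lecR.
    by rewrite exprn_ile1 ?hnorm_ge0 // ltW.
  rewrite ler_pM2l ?ltr0n //.
  exact: (sum_ge_elt (fun z => ip_ge0 hH z)).
have h2 : hnorm ip (T x) ^+ 2 <= complex.Re (2%:R + 2%:R * \sum_(z <- s) ip z z).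
  by rewrite (hnorm_sq hH); move: h1; rewrite lecE => /andP[].
have := hnorm_ge0 ip (T x); nra.
Qed.

Lemma opnorm_ub (R : realType) (H : lmodType R[i]) (ip : H -> H -> R[i])
  (hH : is_hilbert_space ip) (T : H -> H) h :
  compact_op ip T -> hnorm ip h <= 1 -> hnorm ip (T h) <= opnorm ip T.
Proof.
move=> /(compact_bounded hH) [M hM] h1.
apply: ub_le_sup; last by exists h.
by exists M => _ [x hx <-]; exact: hM.
Qed.

Lemma nC_inj (R : realType) (a b : R) : a%:C = b%:C -> a = b.
Proof. exact: complexI. Qed.

Lemma opnorm_tensor (R : realType) (H : lmodType R[i]) (ip : H -> H -> R[i])
  (hH : is_hilbert_space ip) u :
  opnorm ip (tensor_op ip u u) = hnorm ip u ^+ 2.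
Proof.
have ub : forall x, hnorm ip x <= 1 -> hnorm ip (tensor_op ip u u x) <= hnorm ip u ^+ 2.
  move=> x hx; rewrite -lecR /tensor_op (hnormZ hH) rmorphXn /=.
  apply: (le_trans (ler_wpM2r (hnormC_ge0 _ _) (CS hH x u))).
  rewrite expr2 ler_wpM2r ?hnormC_ge0 // -[X in _ <= X]mul1r ler_wpM2r ?hnormC_ge0 //.
  by rewrite -[1]/(1%:C) lecR.
apply/le_anti/andP; split.
  apply: ge_sup; first by exists (hnorm ip (tensor_op ip u u 0)); exists 0 => //=; rewrite /hnorm (ip0l hH) /= sqrtr0 ler01.
  by move=> _ [x hx <-]; exact: ub.
apply: ub_le_sup; first by exists (hnorm ip u ^+ 2) => _ [x hx <-]; exact: ub.
have [u0|unz] := eqVneq (hnorm ip u) 0.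
  exists 0; first by rewrite /= /hnorm (ip0l hH) /= sqrtr0 ler01.
  by rewrite /tensor_op (ip0l hH) scale0r u0 expr0n /= /hnorm (ip0l hH) /= sqrtr0.
set c := ((hnorm ip u)%:C)^-1.
have nupos : 0 < (hnorm ip u)%:C by rewrite ltcR lt_def unz hnorm_ge0.
have cpos : 0 < c by rewrite invr_gt0.
have hx : (hnorm ip (c *: u))%:C = 1.
  by rewrite (hnormZ hH) gtr0_norm // mulVf // gt_eqF.
exists (c *: u).
  by rewrite /= -lecR hx.
apply: nC_inj; rewrite /tensor_op (hnormZ hH) (ipZl hH) -(hnormC hH) rmorphXn /=.
rewrite /c expr2 mulrA mulVf ?gt_eqF // mul1r gtr0_norm //.
Qed.

Lemma mip_facts (R : realType) (H : lmodType R[i]) (ip : H -> H -> R[i])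
  (E : lmodType R[i]) (act : (H -> H) -> E -> E) (mip : E -> E -> (H -> H))
  (hH : is_hilbert_space ip) (hE : is_hilbert_KH_module ip act mip) :
  [/\ (forall x y z h, mip (x + y) z h = mip x z h + mip y z h),
      (forall x y z h, mip (x - y) z h = mip x z h - mip y z h),
      (forall l x z h, mip (l *: x) z h = l *: mip x z h),
      (forall z h, mip 0 z h = 0) &
      (forall x y z h, mip z (x - y) h = mip z x h - mip z y h)].
Proof.
case: hE => _ [hcpt [hlin [hact [hadj _]]]].
have m0 : forall z h, mip 0 z h = 0.
  move=> z h; have := hlin 1 0 0 z h; rewrite !scale1r addr0 => /eqP.
  by rewrite -subr_eq0 opprD addrA subrr sub0r oppr_eq0 => /eqP.
have mD : forall x y z h, mip (x + y) z h = mip x z h + mip y z h.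
  by move=> x y z h; have := hlin 1 x y z h; rewrite !scale1r.
have mZ : forall l x z h, mip (l *: x) z h = l *: mip x z h.
  by move=> l x z h; have := hlin l x 0 z h; rewrite addr0 m0 addr0.
have mB : forall x y z h, mip (x - y) z h = mip x z h - mip y z h.
  by move=> x y z h; rewrite mD -scaleN1r mZ scaleN1r.
split => // x y z h.
apply: (ip_orth hH) => u.
rewrite -(hadj (x - y) z) mB (ipBl hH) (ipBr hH).
by rewrite (hadj x z) (hadj y z).
Qed.

Lemma key (R : realType) (H : lmodType R[i]) (ip : H -> H -> R[i])
  (E : lmodType R[i]) (act : (H -> H) -> E -> E) (mip : E -> E -> (H -> H))
  (hH : is_hilbert_space ip) (hE : is_hilbert_KH_module ip act mip)
  (y : E) (xi : H) (hxi : hnorm ip xi = 1)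
  (hy : singleton_orthonormal_basis ip act mip y)
  (hyy : forall h : H, mip y y h = tensor_op ip xi xi h) (x : E) :
  forall h, mip x x h = tensor_op ip (mip x y xi) (mip x y xi) h.
Proof.
have [mD mB mZ m0 mBr] := mip_facts hH hE.
case: (hE) => hmod [hcpt [hlin [hact [hadj [hpos [hdef _]]]]]].
case: hy => _ hmin hdense.
have xi1 : ip xi xi = 1 by rewrite -(hnormC hH) hxi expr1n.
have pcpt : compact_op ip (mip y y) := hcpt y y.
have plin : op_linear (mip y y) := pcpt.1.
have pp : forall h, mip y y (mip y y h) = mip y y h.
  by move=> h; rewrite !hyy /tensor_op (ipZl hH) xi1 mulr1.
have padj : forall a b, ip (mip y y a) b = ip a (mip y y b).
  move=> a b; rewrite !hyy /tensor_op (ipZl hH) (ipZr hH) -(ipC hH b xi).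
  by rewrite mulrC.
have ey : act (mip y y) y = y.
  pose v := y - act (mip y y) y.
  have h1 : forall h, mip v y h = 0.
    by move=> h; rewrite /v mB hact // pp subrr.
  have h2 : forall h, mip y v h = 0.
    move=> h; apply: (ip_orth hH) => u.
    by rewrite -(hadj v y u h) h1 (ip0l hH) (ip0r hH).
  have h3 : forall h, mip v v h = 0.
    by move=> h; rewrite {1}/v mB h2 hact // h2 (lin0 plin) subrr.
  have := hdef v h3; rewrite /v => /eqP; rewrite subr_eq0 => /eqP.
  by move=> <-.
have Alin : op_linear (mip x y) := (hcpt x y).1.
have AP' : forall v, mip x y (mip y y v) = mip x y v.
  move=> v; apply: (ip_orth hH) => u.
  rewrite -(hadj y x u v) -(hadj y x u (mip y y v)) -padj.
  by rewrite -[in RHS]ey hact.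
have AP : forall v, mip x y v = ip v xi *: mip x y xi.
  by move=> v; rewrite -AP' hyy /tensor_op (linZ Alin).
pose w := x - act (mip x y) y.
have wdef : w = x - act (mip x y) y by [].
clearbody w.
have hw : forall h, mip w y h = 0.
  by move=> h; rewrite wdef mB hact // AP' subrr.
have orth : forall g, gen_submodule ip act y g -> forall h, mip g w h = 0.
  move=> g; elim => [| |a b _ iha _ ihb|l a _ iha|a a' ca _ iha] h.
  - apply: (ip_orth hH) => u.
    by rewrite -(hadj w y u h) hw (ip0l hH) (ip0r hH).
  - exact: m0.
  - by rewrite mD iha ihb addr0.
  - by rewrite mZ iha scaler0.
  - by rewrite hact // iha (lin0 ca.1).
have orth2 : forall g, gen_submodule ip act y g -> forall h, mip w g h = 0.
  move=> g gg h; apply: (ip_orth hH) => u.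
  by rewrite -(hadj g w u h) orth // (ip0l hH) (ip0r hH).
have Wcpt : compact_op ip (mip w w) := hcpt w w.
have Wlin : op_linear (mip w w) := Wcpt.1.
have hWe : forall h, hnorm ip h <= 1 -> forall e : R, 0 < e ->
    ip (mip w w h) h <= (e ^+ 2)%:C.
  move=> h h1 e e0.
  have [g gg hg] := hdense w e e0.
  pose d := w - g.
  have hDd : forall h, mip d d h = mip w w h + mip g g h.
    by move=> k; rewrite /d mB !mBr (orth2 g gg) (orth g gg) subr0 sub0r opprK.
  have e20 : 0 < e ^+ 2 by rewrite exprn_gt0.
  have hop : opnorm ip (mip d d) < e ^+ 2.
    by rewrite -ltr_sqrt // sqrtr_sqr ger0_norm ?ltW.
  have hDh : hnorm ip (mip d d h) < e ^+ 2.
    exact: (le_lt_trans (opnorm_ub hH (hcpt d d) h1) hop).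
  set c := (e ^+ 2)%:C.
  have c0 : 0 < c by rewrite ltcR.
  have cc : c^* = c by apply: conj_Creal; rewrite /c complex_real.
  set q := ip (mip d d h) h.
  have q0 : 0 <= q := hpos d h.
  have qc : ip h (mip d d h) = q by rewrite (ipC hH) conj_Creal // ger0_real.
  have P : ip (mip d d h) (mip d d h) <= c ^+ 2.
    rewrite -(hnormC hH) ler_pXn2r // ?nnegrE ?hnormC_ge0 //; last exact: ltW.
    by apply: ltW; rewrite /c ltcR.
  have K : ip h h <= 1.
    rewrite -(hnormC hH) -rmorphXn /= -[1]/(1%:C) lecR.
    by rewrite exprn_ile1 ?hnorm_ge0.
  have := ip_ge0 hH (mip d d h - c *: h).
  rewrite !(ipBl hH, ipBr hH, ipZl hH, ipZr hH) -/q qc cc.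
  move=> hq.
  have hq2 : 2%:R * c * q <= c ^+ 2 + c ^+ 2.
    have : 2%:R * c * q <= ip (mip d d h) (mip d d h) + c ^+ 2 * ip h h.
      by rewrite -subr_ge0; move: hq; congr (_ <= _); ring.
    move/le_trans; apply; apply: lerD => //.
    by rewrite -[X in _ <= X]mulr1 ler_wpM2l // exprn_ge0 // ltW.
  have qle : q <= c.
    have : 2%:R * c * q <= 2%:R * c * c by move: hq2; congr (_ <= _); ring.
    by rewrite ler_pM2l // mulr_gt0 // ltr0n.
  apply: le_trans qle; rewrite /q hDd (ipDl hH) lerDl; exact: hpos.
have hQ1 : forall h, hnorm ip h <= 1 -> ip (mip w w h) h = 0.
  move=> h h1; set t := ip (mip w w h) h.
  have t0 : 0 <= t := hpos w h.
  have tR : (complex.Re t)%:C = t by apply: RRe_real; apply: ger0_real.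
  have : complex.Re t <= 0.
    apply/ler_addgt0Pr => e e0; rewrite add0r.
    have se : 0 < Num.sqrt e by rewrite sqrtr_gt0.
    have := hWe h h1 (Num.sqrt e) se.
    by rewrite sqr_sqrtr ?(ltW e0) // -/t -tR lecR.
  move=> tle; apply/eqP; rewrite eq_le t0 andbT -tR -[0]/(0%:C) lecR //.
have hQ : forall h, ip (mip w w h) h = 0.
  move=> h.
  have k0 : 0 < 1 + hnorm ip h by rewrite ltr_pwDl ?hnorm_ge0.
  set k := (1 + hnorm ip h)^-1.
  have kpos : 0 < k by rewrite invr_gt0.
  have h1 : hnorm ip (k%:C *: h) <= 1.
    rewrite -lecR (hnormZ hH) ger0_norm; last by rewrite lecR ltW.
    rewrite -rmorphM /= lecR.
    by rewrite /k mulrC -/(_ / _) ler_pdivrMr // mul1r lerDr.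
  have := hQ1 _ h1; rewrite (linZ Wlin) (ipZl hH) (ipZr hH) mulrA.
  move/eqP; rewrite mulf_eq0 => /orP[|/eqP //].
  rewrite mulf_eq0 conjC_eq0 orbb => /eqP kk.
  by move: kpos; rewrite -ltcR kk ltxx.
have hW0 : forall h, mip w w h = 0.
  move=> h; apply: (ip_eq0 hH).
  have := hQ (h + mip w w h).
  rewrite (linD Wlin) !(ipDl hH, ipDr hH) !hQ (hadj w w (mip w w h) h).
  rewrite add0r addr0 => /eqP; rewrite -mulr2n mulrn_eq0 /= => /eqP //.
have w0 := hdef w hW0.
have ex : x = act (mip x y) y.
  by apply/eqP; rewrite -subr_eq0 -wdef w0.
move=> h; rewrite {1}ex hact // AP.
by rewrite (hadj y x h xi).
Qed.

Lemma par_H (R : realType) (H : lmodType R[i]) (ip : H -> H -> R[i])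
  (hH : is_hilbert_space ip) a b :
  hnorm ip (a + b) = hnorm ip a + hnorm ip b ->
  (hnorm ip b)%:C *: a = (hnorm ip a)%:C *: b.
Proof.
move=> hab.
set na := (hnorm ip a)%:C; set nb := (hnorm ip b)%:C.
have caa : na^* = na by apply: conj_Creal; rewrite /na complex_real.
have cbb : nb^* = nb by apply: conj_Creal; rewrite /nb complex_real.
have S : ip b a = 2%:R * na * nb - ip a b.
  have := hnormC hH (a + b); rewrite hab rmorphD /= -/na -/nb.
  rewrite !(ipDl hH, ipDr hH) -(hnormC hH a) -(hnormC hH b) -/na -/nb => /eqP.
  rewrite -subr_eq0 => /eqP e; apply/eqP; rewrite -subr_eq0; apply/eqP.
  have -> : ip b a - (2%:R * na * nb - ip a b) = - ((na + nb) ^+ 2 - (na ^+ 2 + ip a b + (ip b a + nb ^+ 2))) by ring.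
  by rewrite e oppr0.
apply/eqP; rewrite -subr_eq0; apply/eqP; apply: (ip_eq0 hH).
rewrite !(ipBl hH, ipBr hH, ipZl hH, ipZr hH) caa cbb S.
rewrite -(hnormC hH a) -(hnormC hH b) -/na -/nb; ring.
Qed.

Unset Implicit Arguments.

Theorem corollary2p6 (R : realType) (H : lmodType R[i]) (ip : H -> H -> R[i])
  (E : lmodType R[i]) (act : (H -> H) -> E -> E) (mip : E -> E -> (H -> H))
  (hH : is_hilbert_space ip)
  (hE : is_hilbert_KH_module ip act mip)
  (y : E) (xi : H)
  (hxi : hnorm ip xi = 1)
  (hy : singleton_orthonormal_basis ip act mip y)
  (hyy : forall h : H, mip y y h = tensor_op ip xi xi h)
  (x z : E) :
  norm_parallel ip mip x y -> norm_parallel ip mip y z -> norm_parallel ip mip x z.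
Proof.
have [mD mB mZ m0 mBr] := mip_facts hH hE.
pose F v := mip v y xi.
have hiso : forall v, mnorm ip mip v = hnorm ip (F v).
  move=> v; rewrite /mnorm.
  have -> : mip v v = tensor_op ip (F v) (F v).
    by apply: funext => h; apply: (key hH hE hxi hy hyy).
  by rewrite (opnorm_tensor hH) sqrtr_sqr ger0_norm ?hnorm_ge0.
have FD : forall a b l, F (a + l *: b) = F a + l *: F b.
  by move=> a b l; rewrite /F mD mZ.
have xi1 : ip xi xi = 1 by rewrite -(hnormC hH) hxi expr1n.
have Fy : F y = xi by rewrite /F hyy /tensor_op xi1 scale1r.
case=> l [l1 hl]; case=> m [m1 hm].
rewrite !hiso FD Fy in hl; rewrite !hiso FD Fy in hm.
have unitZ : forall c v, `|c| = 1 -> hnorm ip (c *: v) = hnorm ip v.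
  by move=> c v c1; apply: complexI; rewrite (hnormZ hH) c1 mul1r.
rewrite -(unitZ l xi l1) in hl; rewrite -(unitZ m (F z) m1) in hm.
have ea := par_H hH hl; have ec := par_H hH hm.
move: ea ec; rewrite !unitZ // hxi rmorph1 !scale1r => ea ec.
exists (l * m); split; first by rewrite normrM l1 m1 mulr1.
rewrite !hiso FD.
have Fz : F z = (m^* * (hnorm ip (F z))%:C) *: xi.
  have mm : m^* * m = 1 by rewrite -normCKC m1 expr1n.
  by rewrite -scalerA ec scalerA mm scale1r.
set nx := hnorm ip (F x) in ea *; set nz := hnorm ip (F z) in Fz *.
rewrite Fz ea scalerA scalerA -scalerDl.
apply: complexI; rewrite (hnormZ hH) hxi mulr1 rmorphD /=.
have mm' : m * m^* = 1 by rewrite -normCK m1 expr1n.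
rewrite -mulrA (mulrA m) mm' mul1r (mulrC _ l) -mulrDr normrM l1 mul1r ger0_norm //.
by rewrite addr_ge0 // lecR hnorm_ge0.
Qed.
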